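(* Let $V$ be a non-degenerate symplectic space of dimension $n=2r$ over a field $\mathbb{F}$ with $|\mathbb{F}|\ge3$, with hyperbolic basis $\{e_i,f_i\}_{i=1}^r$, $G=\mathrm{Sp}(V)$, and let $B$ be the stabilizer in $G$ of the standard chamber $C=\{C_l\}_{l=1}^{n-1}$ of $\Gamma(V)$. Then $B\cong(\mathbb{F}\rtimes\mathrm{GL}_1(\mathbb{F}))^{r}$, where for $j=1,\dots,r$ the $j$-th factor is realized as the group $B_j$ acting on $\langle e_j,f_j\rangle$, with respect to the basis $(e_j,f_j)$, by the matrices $\begin{pmatrix}a_j&b_j\\0&a_j^{-1}\end{pmatrix}$, $a_j\in\mathbb{F}^*$, $b_j\in\mathbb{F}$ (and $B$ is the group of block-diagonal elements of $G$ with such blocks). Moreover, the kernel of the action of $G$ on $\Gamma(V)$ is $\{\pm1\}$.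
   Context: $\mathsf{s}(e_i,e_j)=\mathsf{s}(f_i,f_j)=0$, $\mathsf{s}(e_i,f_j)=\delta_{ij}$. Matrices act with the convention that the $k$-th column gives the coordinates of the image of the $k$-th basis vector. $\mathrm{Rad}(U)=U\cap U^\perp$. $\Gamma(V)$: for $i\in\{1,\dots,n-1\}$ the objects of type $i$ are the $i$-dimensional subspaces $U$ with $\dim\mathrm{Rad}(U)\le1$; $X,Y$ incident iff $X=Y$, or $X\subseteq Y$ with $X\cap\mathrm{Rad}(Y)=0$, or vice versa. With $h_{2i-1}=e_i$, $h_{2i}=f_i$, the standard chamber is $C_l=\langle h_1,\dots,h_l\rangle$. *)

(* Defs.v *)
From HB Require Import structures.
From mathcomp Require Import all_boot all_order all_algebra.
Set Implicit Arguments. Unset Strict Implicit. Unset Printing Implicit Defensive.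
Import GRing.Theory Num.Theory.
Local Open Scope ring_scope.

(* V = F^n with n = 2r; the ordered basis is h_0,...,h_(n-1)
   (0-based) with h_(2i) = e_(i+1), h_(2i+1) = f_(i+1).
   A matrix g : 'M_n acts on COLUMN coordinate vectors, x |-> g *m x
   (the k-th column of g is the image of h_k).
   Subspaces of V are represented as row spaces (mxalgebra) of square
   matrices whose rows are the (transposed) coordinate vectors; hence the
   image of the subspace U under g is the row space of U *m g^T. *)

Section Defs.
Variables (F : fieldType) (r : nat).
Local Notation n := (r.*2).

(* Gram matrix of s: s(x,y) = x^T J y with s(e_i,f_j) = delta_ij,
   s(e_i,e_j) = s(f_i,f_j) = 0 (and hence s(f_j,e_i) = -delta_ij). *)
Definition sympJ : 'M[F]_n :=
  \matrix_(i, j) (if ~~ odd i && (j == i.+1 :> nat) then 1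
                  else if odd i && (j.+1 == i :> nat) then -1 else 0).

Definition is_sp (g : 'M[F]_n) : Prop := g^T *m sympJ *m g = sympJ.

Definition sperp (U : 'M[F]_n) : 'M[F]_n := kermx ((U *m sympJ)^T).
Definition srad (U : 'M[F]_n) : 'M[F]_n := (U :&: sperp U)%MS.

Definition gamma_obj (U : 'M[F]_n) : Prop :=
  (0 < \rank U < n)%N /\ (\rank (srad U) <= 1)%N.

Definition stabilizes (g U : 'M[F]_n) : Prop := (U *m g^T == U)%MS.

Definition std_chamber (l : nat) : 'M[F]_n := pid_mx l.

Definition in_B (g : 'M[F]_n) : Prop :=
  is_sp g /\ forall l, (0 < l < n)%N -> stabilizes g (std_chamber l).

Definition in_kernel (g : 'M[F]_n) : Prop :=
  is_sp g /\ forall U, gamma_obj U -> stabilizes g U.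

Definition blk_of (i : 'I_n) : 'I_r :=
  Ordinal (elimT idP (etrans (ltn_half_double i r) (ltn_ord i))).

Definition blockB (a b : 'I_r -> F) : 'M[F]_n :=
  \matrix_(i, j)
    (if i./2 == j./2 then
       (if ~~ odd i then (if ~~ odd j then a (blk_of i) else b (blk_of i))
        else (if odd j then (a (blk_of i))^-1 else 0))
     else 0).

End Defs.

(* Main.v *)
Require Import Defs.
From HB Require Import structures.
From mathcomp Require Import all_boot all_order all_algebra zify.
Set Implicit Arguments. Unset Strict Implicit. Unset Printing Implicit Defensive.
Import GRing.Theory Num.Theory.
Local Open Scope ring_scope.

Section Aux.
Variables (F : fieldType) (r : nat).
Local Notation n := (r.*2).
Local Notation bo := (@blk_of r).

Lemma eo_lt (m : 'I_r) : (m.*2 < n)%N. Proof. by rewrite ltn_double. Qed.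
Lemma oo_lt (m : 'I_r) : (m.*2.+1 < n)%N. Proof. by rewrite ltn_Sdouble. Qed.
Definition eo (m : 'I_r) : 'I_n := Ordinal (eo_lt m).
Definition oo (m : 'I_r) : 'I_n := Ordinal (oo_lt m).

Lemma blk_eo m : bo (eo m) = m.
Proof. by apply: val_inj; rewrite /= half_double. Qed.
Lemma blk_oo m : bo (oo m) = m.
Proof. by apply: val_inj; rewrite /= uphalf_double. Qed.

Lemma eo_inj : injective eo.
Proof. by move=> x y /(congr1 bo); rewrite !blk_eo. Qed.
Lemma oo_inj : injective oo.
Proof. by move=> x y /(congr1 bo); rewrite !blk_oo. Qed.
Lemma eo_neq_oo m m' : eo m != oo m'.
Proof. apply/eqP=> H; have := congr1 (fun i : 'I_n => odd i) H; by rewrite /eo /oo /= !odd_double. Qed.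

Lemma ordP (i : 'I_n) : i = eo (bo i) \/ i = oo (bo i).
Proof.
have := odd_double_half i.
case: (odd i) => /= H; [right|left]; apply: val_inj => /=; rewrite -{1}H //.
Qed.

Lemma boP (i : 'I_n) m : (bo i == m) = (i == eo m) || (i == oo m).
Proof.
case: (ordP i) => ->; rewrite ?blk_eo ?blk_oo.
  by rewrite (inj_eq eo_inj) (negbTE (eo_neq_oo _ _)) orbF.
by rewrite (inj_eq oo_inj) [oo _ == eo _]eq_sym (negbTE (eo_neq_oo _ _)).
Qed.

Lemma sum_only (T : finType) (f : T -> F) t :
  (forall t', t' != t -> f t' = 0) -> \sum_t' f t' = f t.
Proof.
move=> H; rewrite (bigD1 t) //= big1 ?addr0 // => t' /H //.
Qed.

Lemma split_sum (f : 'I_n -> F) :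
  \sum_k f k = \sum_(m : 'I_r) (f (eo m) + f (oo m)).
Proof.
rewrite (partition_big bo xpredT) //=; apply: eq_bigr => m _.
rewrite (bigD1 (eo m)) ?blk_eo //= (bigD1 (oo m)) /=; last first.
  by rewrite blk_oo eqxx eq_sym eo_neq_oo.
rewrite big1 ?addr0 // => i /andP [/andP [H0 H1] H2].
by move: H0; rewrite /= boP (negbTE H1) (negbTE H2).
Qed.

Lemma mx_eq_blk (A B : 'M[F]_n) :
  (forall m m', A (eo m) (eo m') = B (eo m) (eo m')) ->
  (forall m m', A (eo m) (oo m') = B (eo m) (oo m')) ->
  (forall m m', A (oo m) (eo m') = B (oo m) (eo m')) ->
  (forall m m', A (oo m) (oo m') = B (oo m) (oo m')) -> A = B.
Proof.
move=> H1 H2 H3 H4; apply/matrixP => i j.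
by case: (ordP i) => ->; case: (ordP j) => ->.
Qed.

Lemma mulmx_blk (A B : 'M[F]_n) i j :
  (A *m B) i j = \sum_m (A i (eo m) * B (eo m) j + A i (oo m) * B (oo m) j).
Proof. by rewrite mxE split_sum. Qed.

Lemma dbl_neq a b : (a.*2 == b.*2.+1)%N = false.
Proof. by apply/negbTE/eqP => /(congr1 odd); rewrite /= !odd_double. Qed.

Lemma dbl_eq (m m' : 'I_r) : (m'.*2.+1 == m.*2.+1)%N = (m == m').
Proof. by rewrite eqSS (inj_eq double_inj) eq_sym. Qed.

Lemma J_ee m m' : sympJ F r (eo m) (eo m') = 0.
Proof. by rewrite mxE /= !odd_double /= dbl_neq. Qed.
Lemma J_eo m m' : sympJ F r (eo m) (oo m') = (m == m')%:R.
Proof. by rewrite mxE /= !odd_double /= dbl_eq; case: eqP. Qed.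
Lemma J_oe m m' : sympJ F r (oo m) (eo m') = - (m == m')%:R.
Proof. by rewrite mxE /= !odd_double /= dbl_eq; case: (m == m'); rewrite /= ?oppr0. Qed.
Lemma J_oo m m' : sympJ F r (oo m) (oo m') = 0.
Proof. by rewrite mxE /= !odd_double /= eqSS eq_sym dbl_neq. Qed.

Section BB.
Variables a b : 'I_r -> F.
Local Notation B := (blockB a b).
Lemma B_ee m m' : B (eo m) (eo m') = if m == m' then a m else 0.
Proof. by rewrite mxE /= ?half_double ?uphalf_double !odd_double /= blk_eo. Qed.
Lemma B_eo m m' : B (eo m) (oo m') = if m == m' then b m else 0.
Proof. by rewrite mxE /= ?half_double ?uphalf_double !odd_double /= blk_eo. Qed.
Lemma B_oe m m' : B (oo m) (eo m') = 0.
Proof. by rewrite mxE /= ?half_double ?uphalf_double !odd_double /=; case: ifP. Qed.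
Lemma B_oo m m' : B (oo m) (oo m') = if m == m' then (a m)^-1 else 0.
Proof. by rewrite mxE /= ?half_double ?uphalf_double !odd_double /= blk_oo. Qed.
End BB.

Lemma AJ_e (A : 'M[F]_n) p k : (A^T *m sympJ F r) p (eo k) = - A (oo k) p.
Proof.
rewrite mulmx_blk (sum_only (t:=k)) => [|m' Hm]; rewrite J_ee J_oe ?eqxx !mxE.
  by rewrite mulr0 add0r mulrN mulr1.
by rewrite (negbTE Hm) oppr0 !mulr0 addr0.
Qed.

Lemma AJ_o (A : 'M[F]_n) p k : (A^T *m sympJ F r) p (oo k) = A (eo k) p.
Proof.
rewrite mulmx_blk (sum_only (t:=k)) => [|m' Hm]; rewrite J_eo J_oo ?eqxx !mxE.
  by rewrite mulr0 addr0 mulr1.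
by rewrite (negbTE Hm) !mulr0 addr0.
Qed.

Lemma sform (A B : 'M[F]_n) p q :
  (A^T *m sympJ F r *m B) p q =
  \sum_m (A (eo m) p * B (oo m) q - A (oo m) p * B (eo m) q).
Proof.
rewrite mulmx_blk; apply: eq_bigr => m _.
by rewrite AJ_e AJ_o mulNr addrC.
Qed.

Lemma blockB_mul (a b a' b' : 'I_r -> F) :
  blockB a b *m blockB a' b'
  = blockB (fun j => a j * a' j) (fun j => a j * b' j + b j / a' j).
Proof.
apply: mx_eq_blk => m m'; rewrite mulmx_blk (sum_only (t:=m)) => [|k Hk];
  rewrite ?(B_ee, B_eo, B_oe, B_oo) ?eqxx; try (have -> : (m == k) = false by rewrite eq_sym (negbTE Hk));
  rewrite ?mul0r ?mulr0 ?addr0 ?add0r //; case: eqP => _; rewrite ?mulr0 ?addr0 ?add0r //.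
by rewrite invfM.
Qed.

Lemma blockB1 : blockB (fun _ : 'I_r => 1 : F) (fun _ => 0) = 1%:M.
Proof.
apply: mx_eq_blk => m m'; rewrite ?(B_ee, B_eo, B_oe, B_oo) !mxE ?(inj_eq eo_inj) ?(inj_eq oo_inj) ?invr1 //.
- by case: eqP.
- by rewrite (negbTE (eo_neq_oo _ _)); case: eqP.
- by rewrite eq_sym (negbTE (eo_neq_oo _ _)).
- by case: eqP.
Qed.

Lemma blockB_sp (a b : 'I_r -> F) : (forall j, a j != 0) -> is_sp (blockB a b).
Proof.
move=> Ha; rewrite /is_sp; apply: mx_eq_blk => m m'; rewrite sform (sum_only (t:=m)) => [|k Hk];
  rewrite ?(B_ee, B_eo, B_oe, B_oo) ?(J_ee, J_eo, J_oe, J_oo) ?eqxx;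
  try (have -> : (k == m) = false by rewrite (negbTE Hk));
  rewrite ?mul0r ?mulr0 ?subrr ?subr0 ?sub0r //; case: eqP => _; rewrite ?mulr0 ?oppr0 //.
- by rewrite mulfV.
- by rewrite mulrC mulfV.
- by rewrite mulrC subrr.
- by rewrite addr0.
Qed.

Lemma pid_mul_entry (M : 'M[F]_n) l i j :
  (pid_mx l *m M) i j = if (i < l)%N then M i j else 0.
Proof.
rewrite mxE (sum_only (t:=i)) => [|k Hk]; rewrite mxE ?(eqxx (i : nat)) /=.
  by case: ifP; rewrite ?mul1r ?mul0r.
case: eqP => [/val_inj H|_]; first by rewrite H eqxx in Hk.
by rewrite mul0r.
Qed.

Lemma mul_pid_entry (M : 'M[F]_n) l i j :
  (M *m pid_mx l) i j = if (j < l)%N then M i j else 0.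
Proof.
rewrite mxE (sum_only (t:=j)) => [|k Hk]; rewrite mxE ?(eqxx (j : nat)) /=.
  by case: ifP; rewrite ?mulr1 ?mulr0.
case: eqP => [/val_inj H|_]; first by rewrite H eqxx in Hk.
by rewrite mulr0.
Qed.

Lemma stab_UT (g : 'M[F]_n) :
  (forall l, (0 < l < n)%N -> stabilizes g (std_chamber F r l)) ->
  forall i j : 'I_n, (j < i)%N -> g i j = 0.
Proof.
move=> Hs i j lt_ji.
have /Hs : (0 < j.+1 < n)%N by rewrite /= (leq_ltn_trans lt_ji).
rewrite /stabilizes /std_chamber => /andP [/submxP [D HD] _].
have := congr1 (fun M : 'M[F]_n => M j i) HD.
rewrite pid_mul_entry ltnSn mxE => ->.
by rewrite mul_pid_entry ltnNge lt_ji.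
Qed.

Lemma UT_stab (g : 'M[F]_n) :
  (forall i j : 'I_n, (j < i)%N -> g i j = 0) ->
  forall l, ((pid_mx l : 'M[F]_n) *m g^T <= (pid_mx l : 'M[F]_n))%MS.
Proof.
move=> Hu l.
have -> : (pid_mx l : 'M[F]_n) *m g^T = (pid_mx l *m g^T) *m pid_mx l; last exact: submxMl.
apply/matrixP => i j; rewrite mul_pid_entry !pid_mul_entry mxE.
case: ltnP => // Hj; case: ltnP => // Hi; rewrite Hu //.
exact: leq_trans Hj Hi.
Qed.

Lemma blockB_ext (a b a' b' : 'I_r -> F) :
  a =1 a' -> b =1 b' -> blockB a b = blockB a' b'.
Proof. by move=> Ha Hb; apply/matrixP => i j; rewrite !mxE Ha Hb. Qed.

Lemma blockB_UT (a b : 'I_r -> F) (i j : 'I_n) : (j < i)%N -> blockB a b i j = 0.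
Proof.
case: (ordP i) => ->; case: (ordP j) => ->; move: (bo i) (bo j) => m m';
  rewrite ?(B_ee, B_eo, B_oe, B_oo) //=; case: (eqVneq m m') => [<-|H] //=.
- by rewrite ltnn.
- by rewrite ltnNge leqnSn.
- by rewrite ltnn.
Qed.

Lemma blockB_inB (a b : 'I_r -> F) : (forall j, a j != 0) -> in_B (blockB a b).
Proof.
move=> Ha; split; first exact: blockB_sp.
move=> l _; rewrite /stabilizes /std_chamber; apply/andP; split.
  by apply: UT_stab => i j; apply: blockB_UT.
set g := blockB a b; set g' := blockB (fun j => (a j)^-1) (fun j => - b j).
have gg' : g *m g' = 1%:M.
  rewrite /g /g' blockB_mul -blockB1; apply: blockB_ext => j /=.
    by rewrite mulfV.
  by rewrite invrK mulrN mulrC addNr.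
have E : (pid_mx l : 'M[F]_n) = (pid_mx l *m g'^T) *m g^T.
  by rewrite -mulmxA -trmx_mul gg' trmx1 mulmx1.
rewrite {1}E; apply: submxMr; apply: UT_stab => i j; exact: blockB_UT.
Qed.

Section Forward.
Variable g : 'M[F]_n.
Hypothesis Hsp : is_sp g.
Hypothesis Hut : forall i j : 'I_n, (j < i)%N -> g i j = 0.
Local Notation J := (sympJ F r).

Lemma UT0 m : g (oo m) (eo m) = 0.
Proof. by apply: Hut => /=. Qed.

Lemma S_eq p q :
  \sum_m (g (eo m) p * g (oo m) q - g (oo m) p * g (eo m) q) = J p q.
Proof. by rewrite -sform Hsp. Qed.

Definition colblk m := forall m', m' != m ->
  [/\ g (eo m') (eo m) = 0, g (oo m') (eo m) = 0,
      g (eo m') (oo m) = 0 & g (oo m') (oo m) = 0].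
Definition Pm m := colblk m /\ g (eo m) (eo m) * g (oo m) (oo m) = 1.

Lemma Pm_a0 m : Pm m -> g (eo m) (eo m) != 0.
Proof. by case=> _ Hp; apply/eqP => H; move: Hp; rewrite H mul0r => /eqP; rewrite eq_sym oner_eq0. Qed.
Lemma Pm_d0 m : Pm m -> g (oo m) (oo m) != 0.
Proof. by case=> _ Hp; apply/eqP => H; move: Hp; rewrite H mulr0 => /eqP; rewrite eq_sym oner_eq0. Qed.

Lemma col_zero m' : Pm m' -> forall q, bo q != m' ->
  g (eo m') q = 0 /\ g (oo m') q = 0.
Proof.
move=> HP q Hq; have a0 := Pm_a0 HP; have d0 := Pm_d0 HP; case: HP => Hc _.
have Jz1 : J (eo m') q = 0.
  by case: (ordP q) Hq => ->; rewrite ?blk_eo ?blk_oo => H; rewrite ?J_ee ?J_eo // eq_sym (negbTE H).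
have Jz2 : J (oo m') q = 0.
  by case: (ordP q) Hq => ->; rewrite ?blk_eo ?blk_oo => H; rewrite ?J_oe ?J_oo // eq_sym (negbTE H) oppr0.
have E1 : g (eo m') (eo m') * g (oo m') q = 0.
  rewrite -Jz1 -S_eq (sum_only (t:=m')) => [|k Hk]; first by rewrite UT0 mul0r subr0.
  by have [-> -> _ _] := Hc k Hk; rewrite !mul0r subr0.
have Ho : g (oo m') q = 0.
  by move/eqP: E1; rewrite mulf_eq0 (negbTE a0) => /eqP.
have E2 : g (oo m') (oo m') * g (eo m') q = 0.
  apply/eqP; rewrite -oppr_eq0; apply/eqP.
  rewrite -Jz2 -S_eq (sum_only (t:=m')) => [|k Hk]; first by rewrite Ho mulr0 sub0r.
  by have [_ _ -> ->] := Hc k Hk; rewrite !mul0r subr0.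
split=> //; by move/eqP: E2; rewrite mulf_eq0 (negbTE d0) => /eqP.
Qed.

Lemma allPm m : Pm m.
Proof.
have [k lt] := ubnP m; elim: k m lt => // k IH m lt.
have Hc : colblk m.
  move=> m' Hm'; case: (ltngtP m' m) => [lt'|gt'|eq'].
  - have Pm' : Pm m' by apply: IH; lia.
    have [H1 H2] : g (eo m') (eo m) = 0 /\ g (oo m') (eo m) = 0.
      by apply: col_zero => //; rewrite blk_eo eq_sym.
    have [H3 H4] : g (eo m') (oo m) = 0 /\ g (oo m') (oo m) = 0.
      by apply: col_zero => //; rewrite blk_oo eq_sym.
    by split.
  - by split; apply: Hut => /=; lia.
  - by move: Hm'; rewrite (val_inj eq') eqxx.
split=> //.
have E : J (eo m) (oo m) = 1 by rewrite J_eo eqxx.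
rewrite -E -S_eq (sum_only (t:=m)) => [|k0 Hk]; first by rewrite UT0 mul0r subr0.
by have [-> -> _ _] := Hc k0 Hk; rewrite !mul0r subr0.
Qed.

Lemma fwd : exists a b : 'I_r -> F, (forall j, a j != 0) /\ g = blockB a b.
Proof.
exists (fun m => g (eo m) (eo m)), (fun m => g (eo m) (oo m)); split.
  by move=> j; apply: Pm_a0; apply: allPm.
apply: mx_eq_blk => m m'; rewrite ?(B_ee, B_eo, B_oe, B_oo);
  case: (eqVneq m m') => [<-|H] //; try by case: (allPm m') => Hc _; case: (Hc m H).
- exact: UT0.
- have [_ Hp] := allPm m; have a0 := Pm_a0 (allPm m).
  by apply: (mulfI a0); rewrite Hp mulfV.
Qed.
End Forward.

Lemma scN1 : - 1%:M = (-1)%:M :> 'M[F]_n.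
Proof. by apply/matrixP => i j; rewrite !mxE mulNrn. Qed.

Lemma kernel_bwd (g : 'M[F]_n) : g = 1%:M \/ g = - 1%:M -> in_kernel g.
Proof.
rewrite scN1; case=> ->; split.
- by rewrite /is_sp trmx1 mul1mx mulmx1.
- by move=> U _; rewrite /stabilizes trmx1 mulmx1 submx_refl.
- by rewrite /is_sp tr_scalar_mx mul_scalar_mx mul_mx_scalar scalerA mulrNN mulr1 scale1r.
- move=> U _; rewrite /stabilizes tr_scalar_mx mul_mx_scalar scaleN1r.
  by apply/eqmxP; apply: eqmx_opp.
Qed.

Lemma line_eig (g : 'M[F]_n) : (0 < r)%N -> in_kernel g ->
  forall v : 'rV[F]_n, exists c, v *m g^T = c *: v.
Proof.
move=> r0 [_ Hs] v; case: (eqVneq v 0) => [->|nz].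
  by exists 0; rewrite mul0mx scale0r.
have rk : \rank <<v>>%MS = 1%N by rewrite genmxE rank_rV nz.
have Hg : gamma_obj <<v>>%MS.
  split; first by rewrite rk /=; lia.
  by apply: leq_trans (mxrankS (capmxSl _ _)) _; rewrite rk.
have := Hs _ Hg; rewrite /stabilizes => /andP [H _].
apply/sub_rVP; rewrite -(genmxE v).
apply: submx_trans H; apply: submxMr; by rewrite genmxE.
Qed.

Lemma kernel_fwd (g : 'M[F]_n) : in_kernel g -> g = 1%:M \/ g = - 1%:M.
Proof.
move=> Hk; case: (posnP r) => [r0|r0].
  left; apply/matrixP => i; have := ltn_ord i; by rewrite {2}r0.
have eig := line_eig r0 Hk.
have off : forall i j : 'I_n, i != j -> g j i = 0.
  move=> i j Hij; have [c Hc] := eig (delta_mx 0 i).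
  have := congr1 (fun M : 'rV[F]_n => M 0 j) Hc.
  by rewrite -rowE !mxE eqxx [j == i]eq_sym (negbTE Hij) /= mulr0.
have diag : forall i j : 'I_n, g i i = g j j.
  move=> i j; case: (eqVneq i j) => [<- //|Hij].
  have [c Hc] := eig (delta_mx 0 i + delta_mx 0 j).
  have := congr1 (fun M : 'rV[F]_n => M 0 i) Hc.
  have := congr1 (fun M : 'rV[F]_n => M 0 j) Hc.
  rewrite !mulmxDl -!rowE !mxE !eqxx [j == i]eq_sym (negbTE Hij) /=.
  rewrite (off _ _ Hij) (off j i) 1?eq_sym // add0r addr0 => -> ->.
  by rewrite addr0 add0r.
pose m0 : 'I_r := Ordinal r0; set c := g (eo m0) (eo m0).
have gc : g = c%:M.
  apply/matrixP => i j; rewrite mxE; case: (eqVneq i j) => [<-|H].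
    by rewrite mulr1n /c (diag i (eo m0)).
  by rewrite mulr0n off // eq_sym.
case: Hk => Hsp _; move: Hsp; rewrite /is_sp gc tr_scalar_mx mul_scalar_mx mul_mx_scalar scalerA.
move=> /(congr1 (fun M : 'M[F]_n => M (eo m0) (oo m0))); rewrite mxE J_eo eqxx mulr1 => /eqP.
rewrite -expr2 sqrf_eq1 => /orP [] /eqP ->; [left|right] => //.
by rewrite scN1.
Qed.
End Aux.

Theorem lemma5p7 (F : fieldType) (r : nat)
    (HF : exists x : F, (x != 0) && (x != 1)) :
  (forall g : 'M[F]_(r.*2),
     in_B g <-> exists a b : 'I_r -> F, (forall j, a j != 0) /\ g = blockB a b)
  /\ (forall a b a' b' : 'I_r -> F,
        blockB a b = blockB a' b' -> a =1 a' /\ b =1 b')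
  /\ (forall a b a' b' : 'I_r -> F,
        blockB a b *m blockB a' b'
        = blockB (fun j => a j * a' j) (fun j => a j * b' j + b j / a' j))
  /\ (forall g : 'M[F]_(r.*2), in_kernel g <-> g = 1%:M \/ g = - 1%:M).
Proof.
split; [|split; [|split]].
- move=> g; split.
    case=> Hsp Hs; apply: fwd Hsp _; exact: stab_UT.
  by case=> a [b [Ha ->]]; apply: blockB_inB.
- move=> a b a' b' E; split => m.
    have := congr1 (fun M : 'M[F]_(r.*2) => M (eo m) (eo m)) E.
    by rewrite /= !B_ee eqxx.
  have := congr1 (fun M : 'M[F]_(r.*2) => M (eo m) (oo m)) E.
  by rewrite /= !B_eo eqxx.
- exact: blockB_mul.
- move=> g; split; [exact: kernel_fwd | exact: kernel_bwd].
Qed.
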